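(* Let $X$ be a space such that $\mathsf{EC}(X,\mathbb{R})$ holds. If $X$ is either normal, or Tychonoff and $\aleph_1$-strongly collectionwise Hausdorff, then $X$ is $\omega_1$-compact.
   Context: All spaces are Hausdorff and maps continuous. For a non-Lindelöf space $X$ and a space $Y$, $\mathsf{EC}(X,Y)$ means: for every continuous $f:X\to Y$ there is a Lindelöf $Z\subset X$ such that $f(X\setminus Z)$ is a singleton (for Lindelöf $X$ the property is regarded as trivially true). A space is $\aleph_1$-strongly collectionwise Hausdorff if every closed discrete subset $\{x_\alpha:\alpha<\lambda\}$ with $\lambda\le\aleph_1$ can be expanded to a discrete collection of open sets $\{U_\alpha\}$ with $x_\alpha\in U_\alpha$. A space is $\omega_1$-compact if every closed discrete subspace is countable. *)

(* Defs.v *)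
From HB Require Import structures.
From mathcomp Require Import all_boot all_order all_algebra.
From mathcomp Require Import all_classical all_reals topology normedtype.
From mathcomp Require Import Rstruct Rstruct_topology.
From Stdlib Require Import Rdefinitions.

Set Implicit Arguments.
Unset Strict Implicit.
Unset Printing Implicit Defensive.

Local Open Scope classical_set_scope.

Section Defs.
Context {X : topologicalType}.

Definition lindelof (Z : set X) : Prop :=
  forall F : set (set X), (forall U, F U -> open U) ->
    Z `<=` \bigcup_(U in F) U ->
    exists G : set (set X), [/\ G `<=` F, countable G & Z `<=` \bigcup_(U in G) U].

Definition discrete_subset (D : set X) : Prop :=
  forall x, D x -> exists U : set X, [/\ open U, U x & U `&` D = [set x]].

Definition closed_discrete (D : set X) : Prop := closed D /\ discrete_subset D.

Definition discrete_family (D : set X) (U : X -> set X) : Prop :=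
  forall p : X, exists V : set X, [/\ open V, V p &
    forall a b, D a -> D b -> V `&` U a !=set0 -> V `&` U b !=set0 -> a = b].

Definition card_le_aleph1 (D : set X) : Prop :=
  exists r : X -> X -> Prop,
    [/\ (forall x, D x -> ~ r x x),
        (forall x y z, D x -> D y -> D z -> r x y -> r y z -> r x z),
        (forall x y, D x -> D y -> [\/ r x y, x = y | r y x]),
        (forall A : set X, A `<=` D -> A !=set0 ->
           exists2 m, A m & forall y, A y -> ~ r y m) &
        (forall x, D x -> countable [set y | D y /\ r y x])].

Definition aleph1_strongly_cwH : Prop :=
  forall D : set X, closed_discrete D -> card_le_aleph1 D ->
    exists U : X -> set X,
      [/\ forall a, D a -> open (U a), forall a, D a -> U a a &
          discrete_family D U].

Definition omega1_compact : Prop :=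
  forall D : set X, closed_discrete D -> countable D.

(** Tychonoff (Hausdorff is a standing assumption): completely regular,
    points and closed sets separated by continuous real functions. *)
Definition completely_regular : Prop :=
  forall (a : X) (B : set X), closed B -> ~ B a ->
    exists f : X -> R, [/\ continuous f, f a = 0%R & forall b, B b -> f b = 1%R].

End Defs.

Definition EC (X Y : topologicalType) : Prop :=
  ~ @lindelof X setT ->
  forall f : X -> Y, continuous f ->
    exists Z : set X, lindelof Z /\ exists y : Y, f @` (~` Z) = [set y].

(* Main.v *)
Require Import Defs.
From mathcomp Require Import all_boot all_classical all_reals topology normedtype.
From mathcomp Require Import Rstruct Rstruct_topology.
From mathcomp Require Import ssralg.
From Stdlib Require Import Rdefinitions.

Set Implicit Arguments.
Unset Strict Implicit.
Unset Printing Implicit Defensive.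
Local Open Scope classical_set_scope.

Lemma countable_sub1 T (S : set T) :
  (forall x y, S x -> S y -> x = y) -> countable S.
Proof.
move=> h; case: (pselect (exists x, S x)) => [[x Sx]|nS].
  apply: (sub_countable (subset_card_le _)) (countable1 x) => y Sy.
  exact: h.
have -> : S = set0 by apply/seteqP; split=> y // Sy; case: nS; exists y.
exact: countable0.
Qed.

Lemma countableU T (A B : set T) :
  countable A -> countable B -> countable (A `|` B).
Proof.
move=> cA cB.
have sub : A `|` B `<=` \bigcup_(i in [set: bool]) (if i then A else B).
  by move=> x [Ax|Bx]; [exists true|exists false].
apply: (sub_countable (subset_card_le sub)).
by apply: bigcup_countable => //; case.
Qed.

Lemma countable_img T U (f : T -> U) (A : set T) :
  countable A -> countable (f @` A).
Proof. by move=> cA; exact: sub_countable (card_image_le f A) cA. Qed.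

Lemma countable_inj T U (f : T -> U) (A : set T) :
  (forall x y, A x -> A y -> f x = f y -> x = y) ->
  countable (f @` A) -> countable A.
Proof.
move=> inj; rewrite (eq_countable (inj_card_eq _)) //.
by move=> x y /set_mem Ax /set_mem Ay; exact: inj.
Qed.

Lemma split_uncountable T (D : set T) : ~ countable D ->
  exists A B : set T, [/\ A `<=` D, B `<=` D, A `&` B = set0,
                         ~ countable A & ~ countable B].
Proof.
move=> nD.
pose P (M : set (T * T)) :=
  (forall p, M p -> [/\ D p.1, D p.2 & p.1 <> p.2]) /\
  (forall p q, M p -> M q -> p <> q ->
      [/\ p.1 <> q.1, p.1 <> q.2, p.2 <> q.1 & p.2 <> q.2]).
have [M [[M1 M2] Mmax]] : exists M, P M /\ forall B, M `<` B -> ~ P B.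
  apply: Zorn_bigcup => F FP Ftot; split.
  - by move=> p [M FM Mp]; exact: (FP M FM).1.
  - move=> p q [M1' FM1 M1p] [M2' FM2 M2q] pq.
    have [s12|s21] := Ftot _ _ FM1 FM2.
    + exact: (FP _ FM2).2 _ _ (s12 _ M1p) M2q pq.
    + exact: (FP _ FM1).2 _ _ M1p (s21 _ M2q) pq.
pose cov x := exists p, M p /\ (p.1 = x \/ p.2 = x).
have claim : forall u v, D u -> D v -> ~ cov u -> ~ cov v -> u = v.
  move=> u v Du Dv cu cv; apply: contrapT => uv.
  apply: (Mmax (M `|` [set (u, v)])).
    split; first by move=> p Mp; left.
    move=> /(_ (u, v) (or_intror erefl)) Muv; apply: cu.
    by exists (u, v); split => //; left.
  split.
    by move=> p [Mp|->]; [exact: M1|split].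
  have nc : forall p, M p -> [/\ p.1 <> u, p.1 <> v, p.2 <> u & p.2 <> v].
    move=> p Mp; split => e.
    - by apply: cu; exists p; split => //; left.
    - by apply: cv; exists p; split => //; left.
    - by apply: cu; exists p; split => //; right.
    - by apply: cv; exists p; split => //; right.
  move=> p q [Mp|->] [Mq|->] pq.
  - exact: M2.
  - by have [? ? ? ?] := nc p Mp; split.
  - have [h1 h2 h3 h4] := nc q Mq; split => /= e.
    + exact: h1. + exact: h3. + exact: h2. + exact: h4.
  - by case: pq.
have cM : ~ countable M.
  move=> cM; apply: nD.
  have sub : D `<=` (fst @` M `|` snd @` M) `|` (D `&` ~` cov).
    move=> x Dx; case: (pselect (cov x)) => [[p [Mp [e|e]]]|ncx].
    - by left; left; exists p.
    - by left; right; exists p.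
    - by right.
  apply: (sub_countable (subset_card_le sub)).
  apply: countableU; first by apply: countableU; exact: countable_img.
  apply: countable_sub1 => x y [Dx nx] [Dy ny]; exact: claim.
exists (fst @` M), (snd @` M); split.
- by move=> _ [p Mp <-]; have [] := M1 p Mp.
- by move=> _ [p Mp <-]; have [] := M1 p Mp.
- apply/seteqP; split => // x [[p Mp <-] [q Mq e]].
  case: (pselect (p = q)) => [pq|pq].
    by subst q; have [_ _] := M1 p Mp; rewrite e.
  by have [_ h _ _] := M2 p q Mp Mq pq; case: h.
- move=> cA; apply: cM; apply: (countable_inj _ cA) => p q Mp Mq e.
  apply: contrapT => pq; by have [h _ _ _] := M2 p q Mp Mq pq.
- move=> cB; apply: cM; apply: (countable_inj _ cB) => p q Mp Mq e.
  apply: contrapT => pq; by have [_ _ _ h] := M2 p q Mp Mq pq.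
Qed.
Lemma sub_cd (X : topologicalType) (D S : set X) :
  closed_discrete D -> S `<=` D -> closed_discrete S.
Proof.
move=> [cD dD] SD; split.
- move=> p clp.
  have Dp : D p.
    apply: cD => B nB; have [q [Sq Bq]] := clp B nB; exists q; split => //.
    exact: SD.
  have [U [oU Up UD]] := dD p Dp.
  have [q [Sq Uq]] := clp U (open_nbhs_nbhs (conj oU Up)).
  have : (U `&` D) q by split => //; exact: SD.
  by rewrite UD => /= eq; rewrite -eq.
- move=> x Sx; have [U [oU Ux UD]] := dD x (SD x Sx); exists U; split => //.
  apply/seteqP; split => y /=.
    move=> [Uy Sy]; have : (U `&` D) y by split => //; exact: SD.
    by rewrite UD.
  by move=> ->.
Qed.

Lemma lind_cd (X : topologicalType) (Z S : set X) :
  lindelof Z -> closed_discrete S -> S `<=` Z -> countable S.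
Proof.
move=> lZ [cS dS] SZ.
pose F := [set U : set X | open U /\
  (U = ~` S \/ exists a, S a /\ U `&` S = [set a])].
have cov : Z `<=` \bigcup_(U in F) U.
  move=> z Zz; case: (pselect (S z)) => [Sz|nSz].
  - have [U [oU Uz US]] := dS z Sz; exists U => //; split => //; right.
    by exists z.
  - exists (~` S) => //; split; [exact: closed_openC | by left].
have [G [GF cG ZG]] := lZ F (fun U FU => FU.1) cov.
have sub : S `<=` \bigcup_(U in G) (U `&` S).
  by move=> x Sx; have [U GU Ux] := ZG x (SZ x Sx); exists U.
apply: (sub_countable (subset_card_le sub)); apply: bigcup_countable => // U GU.
have [_ hU] := GF U GU; case: hU => [->|[a [_ ->]]]; last exact: countable1.
by apply: countable_sub1 => x y [nx Sx].
Qed.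

Lemma final (X : topologicalType) (D A B : set X) (f : X -> R) (r0 r1 : R) :
  EC X R -> closed_discrete D -> A `<=` D -> B `<=` D ->
  ~ countable A -> ~ countable B -> continuous f ->
  (forall a, A a -> f a = r0) -> (forall b, B b -> f b = r1) -> r0 <> r1 ->
  False.
Proof.
move=> ec cdD AD BD nA nB cf fA fB r01.
have cdA := sub_cd cdD AD; have cdB := sub_cd cdD BD.
have nL : ~ lindelof (@setT X).
  by move=> lT; apply: nA; exact: lind_cd lT cdA (@subsetT _ _).
have [Z [lZ [y fZ]]] := ec nL f cf.
have pick : forall C : set X, closed_discrete C -> ~ countable C ->
    exists c, C c /\ ~ Z c.
  move=> C cdC nC; apply: contrapT => h; apply: nC.
  apply: (lind_cd lZ cdC) => c Cc; apply: contrapT => nZ; apply: h.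
  by exists c.
have [a [Aa nZa]] := pick A cdA nA.
have [b [Bb nZb]] := pick B cdB nB.
have : [set y] (f a) by rewrite -fZ; exists a.
have : [set y] (f b) by rewrite -fZ; exists b.
by move=> /= eb ea; apply: r01; rewrite -(fA a Aa) -(fB b Bb) ea eb.
Qed.
Lemma aleph1_sub (X : topologicalType) (D : set X) : ~ countable D ->
  exists D' : set X, [/\ D' `<=` D, ~ countable D' & card_le_aleph1 D'].
Proof.
move=> nD.
have [R wR] := wochoice.well_ordering_principle X.
have wmin : forall A : set X, (exists x, A x) ->
    exists m, [/\ A m, (forall y, A y -> R m y) &
      (forall m', A m' -> (forall y, A y -> R m' y) -> m' = m)].
  move=> A [x Ax].
  have inP : forall y, (y \in [pred x | `[< A x >]]) <-> A y.
    by move=> y; rewrite inE.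
  have ne : wochoice.nonempty [pred x | `[< A x >]].
    by rewrite /wochoice.nonempty; exists x; apply/inP.
  have [m [[mA lb] uq]] := wR _ ne.
  exists m; split.
  - exact/inP.
  - by move=> y Ay; apply: lb; apply/inP.
  - move=> m' Am' lb'; apply: esym; apply: uq; split.
      exact/inP.
    by move=> y /inP; exact: lb'.
have refl : forall x, R x x.
  move=> x; have [m [/= -> lb _]] := wmin [set x] (ex_intro _ x erefl).
  exact: lb.
have anti : forall x y, R x y -> R y x -> x = y.
  move=> x y xy yx.
  have [m [_ _ uq]] := wmin [set z | z = x \/ z = y] (ex_intro _ x (or_introl erefl)).
  rewrite (uq x); last by move=> z [->|->].
    rewrite (uq y) //; last by move=> z [->|->].
    by right.
  by left.
have tot : forall x y, R x y \/ R y x.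
  move=> x y.
  have [m [[->|->] lb _]] := wmin [set z | z = x \/ z = y] (ex_intro _ x (or_introl erefl)).
  - by left; apply: lb; right.
  - by right; apply: lb; left.
have trans : forall x y z, R x y -> R y z -> R x z.
  move=> x y z xy yz.
  have [m [[->|[->|->]] lb _]] := wmin [set w | w = x \/ w = y \/ w = z]
     (ex_intro _ x (or_introl erefl)).
  - by apply: lb; right; right.
  - by have e := anti _ _ xy (lb x (or_introl erefl)); rewrite e.
  - have e := anti _ _ yz (lb y (or_intror (or_introl erefl))).
    by rewrite -e.
pose r x y := R x y /\ x <> y.
pose D' := [set x | D x /\ countable [set y | D y /\ r y x]].
have D'D : D' `<=` D by move=> x [].
have nD' : ~ countable D'.
  move=> cD'.
  have ne : exists x, (D `\` D') x.
    apply: contrapT => h; apply: nD.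
    apply: (sub_countable (subset_card_le _)) cD' => x Dx.
    by apply: contrapT => nx; apply: h; exists x.
  have [m [[Dm nm] lb _]] := wmin _ ne.
  apply: nm; split => //.
  apply: (sub_countable (subset_card_le _)) cD' => y [Dy [ym nym]].
  apply: contrapT => ny; apply: nym; apply: anti => //.
  exact: lb.
exists D'; split => //.
exists r; split.
- by move=> x _ [].
- move=> x y z _ _ _ [xy nxy] [yz nyz]; split; first exact: trans xy yz.
  move=> e; subst z; apply: nxy; exact: anti.
- move=> x y _ _; case: (pselect (x = y)) => [->|nxy]; first by constructor 2.
  by have [xy|yx] := tot x y; [constructor 1|constructor 3]; split => // e;
    apply: nxy.
- move=> A AD' [x Ax]; have [m [Am lb _]] := wmin A (ex_intro _ x Ax).
  exists m => // y Ay [ym nym]; apply: nym; apply: anti => //; exact: lb.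
- move=> x [Dx cx]; apply: (sub_countable (subset_card_le _)) cx.
  by move=> y [[Dy _] ryx].
Qed.

Lemma R10 : (1%R : R) <> (0%R : R).
Proof. by move=> h; have := @GRing.Theory.oner_neq0 R; move/eqP; apply; exact: h. Qed.

Theorem theorem3p4 (X : topologicalType) :
  hausdorff_space X ->
  EC X R ->
  (@normal_space X \/
   (completely_regular (X := X) /\ aleph1_strongly_cwH (X := X))) ->
  omega1_compact (X := X).
Proof.
move=> hX ec hyp D cdD; apply: contrapT => nD.
case: hyp => [nX|[creg cwH]].
  have [A [B [AD BD AB nA nB]]] := split_uncountable nD.
  have cA := (sub_cd cdD AD).1; have cB := (sub_cd cdD BD).1.
  have := (@normal_separatorP R X).1 nX A B cA cB AB.
  move=> /(@uniform_separatorP _ R) [f [cf _ fA fB]].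
  apply: (final ec cdD AD BD nA nB cf (r0 := 0%R) (r1 := 1%R)).
  - by move=> a Aa; apply: fA; exists a.
  - by move=> b Bb; apply: fB; exists b.
  - by move=> h; apply: R10.
have [D' [D'D nD' cD']] := aleph1_sub nD.
have cdD' := sub_cd cdD D'D.
have [U [oU UU dU]] := cwH D' cdD' cD'.
have [A [B [AD BD AB nA nB]]] := split_uncountable nD'.
have ex_g : forall b, exists g : X -> R, B b ->
    [/\ continuous g, g b = 0%R & forall x, ~ U b x -> g x = 1%R].
  move=> b; case: (pselect (B b)) => Bb; last by exists (fun _ => 0%R).
  have [g [cg gb g1]] := creg b (~` U b) (open_closedC (oU b (BD b Bb)))
    (fun h => h (UU b (BD b Bb))).
  by exists g.
have [gf hg] := choice ex_g.
have ex_s : forall x, exists s : X, (exists b, B b /\ U b x) -> B s /\ U s x.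
  move=> x; case: (pselect (exists b, B b /\ U b x)) => [[b hb]|nb].
    by exists b.
  by exists x.
have [sel hsel] := choice ex_s.
pose F x := if `[< exists b, B b /\ U b x >] then gf (sel x) x else 1%R.
have uniq : forall a b x, D' a -> D' b -> U a x -> U b x -> a = b.
  move=> a b x Da Db Ua Ub; have [V [oV Vx hV]] := dU x.
  by apply: hV => //; exists x.
have FA : forall a, A a -> F a = 1%R.
  move=> a Aa; rewrite /F; case: asboolP => // -[b [Bb Ub]].
  have e := uniq _ _ _ (AD _ Aa) (BD _ Bb) (UU a (AD _ Aa)) Ub.
  subst b; have : (A `&` B) a by [].
  by rewrite AB.
have FB : forall b, B b -> F b = 0%R.
  move=> b Bb; rewrite /F; case: asboolP => [hx|nx]; last first.
    by exfalso; apply: nx; exists b; split => //; exact: UU (BD _ Bb).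
  have [Bs Us] := hsel b hx.
  have -> : sel b = b by apply: uniq (BD _ Bs) (BD _ Bb) Us (UU _ (BD _ Bb)).
  by have [] := hg b Bb.
have cF : continuous F.
  move=> p; have [V [oV Vp hV]] := dU p.
  have nVp : nbhs p V := open_nbhs_nbhs (conj oV Vp).
  case: (pselect (exists b, B b /\ V `&` U b !=set0)) => [[b0 [Bb0 Vb0]]|nV].
    have [cg _ g1] := hg b0 Bb0.
    have eq : forall x, V x -> F x = gf b0 x.
      move=> x Vx; rewrite /F; case: asboolP => [hx|nx].
        have [Bs Us] := hsel x hx.
        have -> // : sel x = b0.
        by apply: hV (BD _ Bs) (BD _ Bb0) _ Vb0; exists x.
      rewrite g1 // => Ux; apply: nx; exists b0; split => //.
    have h1 : F @ p --> gf b0 p.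
      apply: cvg_trans _ (cg p).
      apply: near_eq_cvg; apply: filterS nVp => x Vx; by rewrite eq.
    by rewrite -(eq p Vp) in h1.
  have eq : forall x, V x -> F x = 1%R.
    move=> x Vx; rewrite /F; case: asboolP => // hx; exfalso.
    have [Bs Us] := hsel x hx; apply: nV; exists (sel x); split => //.
    by exists x.
  have h1 : F @ p --> (1%R : R).
    apply: cvg_trans _ (@cst_continuous X R 1%R p).
    apply: near_eq_cvg; apply: filterS nVp => x Vx; by rewrite eq.
  by rewrite -(eq p Vp) in h1.
apply: (final ec cdD' AD BD nA nB cF FA FB).
exact: R10.
Qed.
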